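(* Let $\Omega$ be a smooth bounded domain in $\mathbb{R}^N$, $N\ge 2$, and let $2<p<\infty$ if $N=2$, $2<p<2N/(N-2)$ if $N\ge3$. For each $0<\varepsilon\le1$ let $u^\varepsilon$ be a critical point of \[ J_\varepsilon(u) = \int_\Omega \left[\tfrac12 |\nabla u|^2 + \mathcal{B}\!\left(\tfrac{u-1}{\varepsilon}\right) - \tfrac1p (u-1)_+^p\right] dx,\quad u\in H^1_0(\Omega), \] with $J_\varepsilon(u^\varepsilon)=c_\varepsilon$. Let $A_0>0$ be a constant such that $(u^\varepsilon-1)_+^{p-1}\le A_0$ in $\Omega$ for all $0<\varepsilon\le 1$, and let $\varphi_0>0$ solve $-\Delta\varphi_0=A_0$ in $\Omega$, $\varphi_0=0$ on $\partial\Omega$. Then for $0<\varepsilon\le1$, $u^\varepsilon(x)\le\varphi_0(x)$ for all $x\in\Omega$; in particular $\{u^\varepsilon\ge1\}\subset\{\varphi_0\ge1\}\subset\subset\Omega$.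
   Context: $t_+=\max\{t,0\}$. $\beta:\mathbb{R}\to[0,2]$ is a fixed smooth function with $\beta(t)=0$ for $t\le0$ and $t\ge1$, $\beta(t)>0$ for $0<t<1$, $\int_0^1\beta=1$; $\mathcal{B}(t)=\int_0^t\beta(s)\,ds$. $\Gamma_\varepsilon=\{\gamma\in C([0,1],H^1_0(\Omega)):\gamma(0)=0,\ J_\varepsilon(\gamma(1))<0\}$ and $c_\varepsilon=\inf_{\gamma\in\Gamma_\varepsilon}\max_{u\in\gamma([0,1])}J_\varepsilon(u)$. Critical points of $J_\varepsilon$ are classical solutions of $\Delta u=\frac1\varepsilon\beta(\frac{u-1}{\varepsilon})-(u-1)_+^{p-1}$ in $\Omega$, $u=0$ on $\partial\Omega$. (Such a constant $A_0$ exists since the $u^\varepsilon$ are uniformly bounded.) *)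

(* Defs.v *)
From HB Require Import structures.
From mathcomp Require Import all_boot all_order all_algebra.
From mathcomp Require Import all_classical all_reals all_analysis.
Set Implicit Arguments. Unset Strict Implicit. Unset Printing Implicit Defensive.
Import Order.TTheory GRing.Theory Num.Theory.
Import numFieldNormedType.Exports.
Local Open Scope classical_set_scope.
Local Open Scope ring_scope.

Definition unitv {R : realType} {N : nat} (i : 'I_N) : 'rV[R]_N :=
  delta_mx 0 i.

Definition partial {R : realType} {N : nat} (i : 'I_N)
  (f : 'rV[R]_N -> R) (x : 'rV[R]_N) : R :=
  derive f x (unitv i).

Definition laplacian {R : realType} {N : nat}
  (f : 'rV[R]_N -> R) (x : 'rV[R]_N) : R :=
  \sum_(i < N) partial i (partial i f) x.

Definition C2_on {R : realType} {N : nat} (O : set 'rV[R]_N)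
  (f : 'rV[R]_N -> R) : Prop :=
  (forall x, O x -> differentiable f x) /\
  (forall i x, O x -> differentiable (partial i f) x) /\
  (forall i j x, O x -> {for x, continuous (partial j (partial i f))}).

(* Boundary of Omega (Omega open) *)
Definition bdry {R : realType} {N : nat} (O : set 'rV[R]_N) : set 'rV[R]_N :=
  closure O `\` O.

Definition classical_dirichlet_sol {R : realType} {N : nat}
  (O : set 'rV[R]_N) (g : 'rV[R]_N -> R -> R) (u : 'rV[R]_N -> R) : Prop :=
  C2_on O u /\
  {within closure O, continuous u} /\
  (forall x, bdry O x -> u x = 0) /\
  (forall x, O x -> laplacian u x = g x (u x)).

Definition pos_part {R : realType} (t : R) : R := Num.max t 0.

Definition smooth1 {R : realType} (f : R -> R) : Prop :=
  forall n x, derivable (iter n (@derive1 R R) f) x 1.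

Definition admissible_beta {R : realType} (beta : R -> R) : Prop :=
  smooth1 beta /\
  (forall t, 0 <= beta t <= 2) /\
  (forall t, (t <= 0 \/ 1 <= t) -> beta t = 0) /\
  (forall t, 0 < t < 1 -> 0 < beta t) /\
  (\int[@lebesgue_measure R]_(t in `[0%R, 1%R]) (beta t)%:E = 1%:E)%E.

(* Main.v *)
Require Import Defs.
From HB Require Import structures.
From mathcomp Require Import all_boot all_order all_algebra.
From mathcomp Require Import all_classical all_reals all_analysis.
From mathcomp Require Import lra ring.
Import Order.TTheory GRing.Theory Num.Theory.
Import numFieldNormedType.Exports.
Local Open Scope classical_set_scope.
Local Open Scope ring_scope.

Section S.
Variable R : realType.


Lemma max_second (g : R -> R) (r : R) : 0 < r ->
  (forall t, `|t| < r -> g t <= g 0) ->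
  (forall t, `|t| < r -> derivable g t 1) ->
  derivable ('D_1 g) 0 1 -> 'D_1 ('D_1 g) 0 <= 0.
Proof.
move=> r0 gmax gd g2d.
have itv t : (t \in `]-r, r[) = (`|t| < r) by rewrite in_itv /= ltr_norml.
have d0 : 'D_1 g 0 = 0.
  have := @derive1_at_max R g (- r) r 0.
  case.
  - lra.
  - by move=> t; rewrite itv; apply: gd.
  - by rewrite itv normr0.
  - by move=> t; rewrite itv => /gmax.
  - by [].
rewrite leNgt; apply/negP => c0.
have Hc : (fun h : R => h^-1 *: (('D_1 g \o shift 0) (h *: 1) - 'D_1 g 0)) @ 0^' --> 'D_1 ('D_1 g) 0 := g2d.
move: (Hc) => /cvgr_gt /(_ 0 c0).
case => e /= e0 He.
have pos h : 0 < h < e -> 0 < 'D_1 g h.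
  case/andP=> h0 he.
  have := He h; rewrite /ball_ /= sub0r normrN gtr0_norm // => /(_ he (lt0r_neq0 h0)).
  rewrite d0 subr0 addr0.
  by rewrite /GRing.scale /= mulr1 pmulr_rgt0 // invr_gt0.
pose s := Num.min (e / 2) (r / 2).
have s0 : 0 < s by rewrite lt_min !divr_gt0.
have se : s < e by rewrite gt_min ltr_pdivrMr //; lra.
have sr : s < r by rewrite gt_min; apply/orP; right; lra.
have [c cI Hmvt] : exists2 c, c \in `]0, s[ & g s - g 0 = 'D_1 g c * (s - 0).
  apply: (@MVT R g (derive g ^~ 1) 0 s s0).
    move=> x; rewrite in_itv /= => /andP[x0 xs]; apply: derivableP; apply: gd.
    rewrite gtr0_norm //; lra.
  apply: derivable_within_continuous => x; rewrite in_itv /= => /andP[x0 xs].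
  apply: gd; rewrite ger0_norm //; lra.
move: cI; rewrite in_itv /= => /andP[c0' cs].
have := pos c; rewrite c0' /= => /(_ (lt_trans cs se)) => Dc.
have := gmax s; rewrite gtr0_norm // => /(_ sr).
have : 0 < 'D_1 g c * (s - 0) by rewrite subr0 mulr_gt0.
rewrite -Hmvt; lra.
Qed.

End S.

Section S1.

Variable R : realType.
Variable n : nat.

Lemma line_expr (f : 'rV[R]_n -> R) (a v : 'rV[R]_n) (t : R) :
  (fun h : R => h^-1 *: (((fun s : R => f (a + s *: v)) \o shift t) (h *: 1) - f (a + t *: v)))
  = (fun h => h^-1 *: ((f \o shift (a + t *: v)) (h *: v) - f (a + t *: v))).
Proof.
apply/funext => h /=.
congr (_ *: (f _ - _)).
rewrite /GRing.scale /= mulr1; change (a + (h + t) *: v = h *: v + (a + t *: v)).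
by rewrite scalerDl addrA [a + h *: v]addrC -addrA [a + _]addrC.
Qed.

Lemma line_derive (f : 'rV[R]_n -> R) (a v : 'rV[R]_n) (t : R) :
  'D_1 (fun s : R => f (a + s *: v)) t = 'D_v f (a + t *: v).
Proof. by rewrite /derive line_expr. Qed.

Lemma line_derivable (f : 'rV[R]_n -> R) (a v : 'rV[R]_n) (t : R) :
  derivable (fun s : R => f (a + s *: v)) t 1 <-> derivable f (a + t *: v) v.
Proof. by rewrite /derivable line_expr. Qed.

End S1.

Section S4.

Variable R : realType.
Variable n : nat.

Lemma bounded_closure (A : set 'rV[R]_n) : bounded_set A -> bounded_set (closure A).
Proof.
move=> AB; have AB2 : \forall M \near +oo, forall x, A x -> `|x| <= M := AB.
change (\forall M \near +oo, forall x, closure A x -> `|x| <= M).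
near=> M.
have HM : forall y, A y -> `|y| <= M by near: M.
have cl : closed [set x : 'rV[R]_n | `|x| <= M].
  change (closed ((fun x : 'rV[R]_n => `|x|) @^-1` [set y : R | y <= M])).
  apply: preimage_closed; last exact: closed_le.
  by move=> z _; apply: norm_continuous.
move=> x Ax.
have := closureS HM Ax.
by rewrite -(closure_id _).1.
Unshelve. all: by end_near.
Qed.

Lemma partC (O : set 'rV[R]_n) (f : 'rV[R]_n -> R) :
  {within closure O, continuous f} -> (forall x, bdry O x -> f x = 0) ->
  closure [set x | O x /\ 1 <= f x] `<=` O.
Proof.
move=> fc fb x xS.
apply: contrapT => xO.
have xcl : closure O x by apply: (closureS _ xS) => z [].
have fx0 : f x = 0 by apply: fb.
have H : f @ within (closure O) (nbhs x) --> f x := (subspace_continuousP _ _).1 fc x xcl.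
move: H; rewrite fx0 => /cvgr_lt /(_ 1 ltr01) H.
have [z [[zO zf] zB]] := xS _ H.
have := zB (subset_closure zO); lra.
Qed.
End S4.

Section S5.

Variable R : realType.
Variable n : nat.
Implicit Types f g : 'rV[R]_n -> R.

Definition comb f (c : R) g := fun z => f z + c * g z.

Lemma combE f c g : comb f c g = f + c \*: g.
Proof. by []. Qed.

Lemma comb_derivable f c g x v : derivable f x v -> derivable g x v ->
  derivable (comb f c g) x v.
Proof. move=> df dg; change (derivable (f + c \*: g) x v); exact: (derivableD df (derivableZ (k:=c) dg)). Qed.

Lemma comb_derive f c g x v : derivable f x v -> derivable g x v ->
  'D_v (comb f c g) x = 'D_v f x + c * 'D_v g x.
Proof.
move=> df dg; change ('D_v (f + c \*: g) x = 'D_v f x + c * 'D_v g x).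
by rewrite (deriveD df (derivableZ (k:=c) dg)) (deriveZ c dg).
Qed.

Lemma comb_partial_near (O : set 'rV[R]_n) f c g x i : open O -> O x ->
  (forall z v, O z -> derivable f z v) -> (forall z v, O z -> derivable g z v) ->
  {near x, partial i (comb f c g) =1 comb (partial i f) c (partial i g)}.
Proof.
move=> Oo Ox df dg.
have : \forall z \near x, O z by apply: Oo.
apply: filterS => z Oz.
by rewrite /partial comb_derive //; [apply: df | apply: dg].
Qed.

Lemma comb_second (O : set 'rV[R]_n) f c g x i : open O -> O x ->
  (forall z v, O z -> derivable f z v) -> (forall z v, O z -> derivable g z v) ->
  derivable (partial i f) x (unitv i) -> derivable (partial i g) x (unitv i) ->
  derivable (partial i (comb f c g)) x (unitv i) /\
  partial i (partial i (comb f c g)) x =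
    partial i (partial i f) x + c * partial i (partial i g) x.
Proof.
move=> Oo Ox df dg d2f d2g.
have N := @comb_partial_near O f c g x i Oo Ox df dg.
have N' : {near x, comb (partial i f) c (partial i g) =1 partial i (comb f c g)}.
  by apply: filterS N => z ->.
split.
  by apply: (near_eq_derivable N'); apply: comb_derivable.
rewrite {1}/partial (near_eq_derive _ N).
by rewrite comb_derive.
Qed.

Lemma comb_lap (O : set 'rV[R]_n) f c g x : open O -> O x ->
  (forall z v, O z -> derivable f z v) -> (forall z v, O z -> derivable g z v) ->
  (forall i, derivable (partial i f) x (unitv i)) ->
  (forall i, derivable (partial i g) x (unitv i)) ->
  laplacian (comb f c g) x = laplacian f x + c * laplacian g x.
Proof.
move=> Oo Ox df dg d2f d2g; rewrite /laplacian.
rewrite mulr_sumr -big_split; apply: eq_bigr => i _.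
exact: (@comb_second O f c g x i Oo Ox df dg (d2f i) (d2g i)).2.
Qed.

Variable i0 : 'I_n.
Definition crd (x : 'rV[R]_n) : R := x ord0 i0.

Lemma crd_is_derive (x v : 'rV[R]_n) : is_derive x v crd (crd v).
Proof.
have E : (fun h : R => h^-1 *: ((crd \o shift x) (h *: v) - crd x)) @ 0^' --> crd v.
  apply: (cvg_trans _ (cvg_cst (crd v))).
  apply: (@near_eq_cvg _ _ _ (dnbhs_filter _)); near=> h.
  rewrite /= /crd !mxE addrK /GRing.scale /= mulrA mulVf ?mul1r //.
  near: h; exact: nbhs_dnbhs_neq.
  exact: dnbhs_filter.
have D : derivable crd x v by apply/cvg_ex; exists (crd v).
by apply: DeriveDef => //; exact: cvg_lim E.
Unshelve. all: by end_near.
Qed.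

Definition qf : 'rV[R]_n -> R := crd * crd.

Lemma qf_is_derive x v : is_derive x v qf (2 * crd x * crd v).
Proof.
have H := @is_deriveM R _ crd crd x v (crd v) (crd v) (crd_is_derive x v) (crd_is_derive x v).
have -> : 2 * crd x * crd v = crd x *: crd v + crd x *: crd v.
  by rewrite /GRing.scale /=; ring.
exact: H.
Qed.

Lemma qf_partial j : partial j qf = (2 * crd (unitv j)) \*: crd.
Proof.
apply/funext => z; rewrite /partial.
have [_ ->] := qf_is_derive z (unitv j).
by rewrite /= /GRing.scale /=; ring.
Qed.

Lemma qf_second (j : 'I_n) (x : 'rV[R]_n) : derivable (partial j qf) x (unitv j) /\ partial j (partial j qf) x = 2 * crd (unitv j) ^+ 2.
Proof.
have H := @is_deriveZ R _ _ crd (2 * crd (unitv j)) x (unitv j) _ (crd_is_derive x (unitv j)).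
rewrite qf_partial; split; first by case: H.
rewrite {1}/partial; have [_ ->] := H.
by rewrite /GRing.scale /=; ring.
Qed.

Lemma qf_lap x : laplacian qf x = 2 * \sum_(j < n) crd (unitv j) ^+ 2.
Proof.
rewrite /laplacian mulr_sumr; apply: eq_bigr => j _.
exact: (qf_second j x).2.
Qed.

Lemma qf_lap_gt0 x : 0 < laplacian qf x.
Proof.
rewrite qf_lap mulr_gt0 // (bigD1 i0) //=.
have -> : crd (unitv i0) = 1 by rewrite /crd /unitv mxE !eqxx.
rewrite expr1n ltr_pwDl // sumr_ge0 // => j _; exact: sqr_ge0.
Qed.

Lemma qf_ge0 x : 0 <= qf x.
Proof. by rewrite /qf /= -expr2 sqr_ge0. Qed.

End S5.
Arguments comb {R n}.
Arguments crd {R n}.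
Arguments qf {R n}.

Section MP.
Variable R : realType.
Variable n : nat.

Lemma comb_within (A : set 'rV[R]_n) f c g : {within A, continuous f} -> {within A, continuous g} ->
  {within A, continuous (comb f c g)}.
Proof.
move=> /subspace_continuousP fc /subspace_continuousP gc.
apply/subspace_continuousP => x Ax.
apply: cvgD; first exact: fc.
apply: cvgM; [exact: cvg_cst | exact: gc].
Qed.

Lemma maxprinc (O : set 'rV[R]_n) (i0 : 'I_n) (w : 'rV[R]_n -> R) :
  open O -> bounded_set O ->
  {within closure O, continuous w} ->
  (forall x, bdry O x -> w x <= 0) ->
  (forall z v, O z -> derivable w z v) ->
  (forall z i, O z -> derivable (partial i w) z (unitv i)) ->
  (forall z, O z -> 0 <= laplacian w z) ->
  forall x, O x -> w x <= 0.
Proof.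
move=> Oo Ob wc wb dw d2w lw x0 Ox0.
rewrite leNgt; apply/negP => w0.
have cO : compact (closure O).
  apply: bounded_closed_compact; [exact: bounded_closure | exact: closed_closure].
have ne : closure O !=set0 by exists x0; apply: subset_closure.
have qc : {within closure O, continuous (qf i0)}.
  apply: continuous_subspaceT => z; apply: continuousM; apply: coord_continuous.
have [ym ymcl ymax] := EVT_max_rV ne cO qc.
set Q := qf i0 ym.
have Q0 : 0 <= Q by apply: qf_ge0.
set d := w x0 / (2 * (Q + 1)).
have d0 : 0 < d by rewrite /d divr_gt0 // mulr_gt0 //; lra.
have dQ : d * Q < w x0.
  have E : d * (2 * (Q + 1)) = w x0 by rewrite /d mulfVK //; apply: lt0r_neq0; lra.
  nra.
pose V := comb w d (qf i0).
have Vc : {within closure O, continuous V} by apply: comb_within.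
have [y ycl ymaxV] := EVT_max_rV ne cO Vc.
have Vy : w x0 <= V y.
  have := ymaxV x0; rewrite inE => /(_ (subset_closure Ox0)).
  rewrite /V /comb; have := @qf_ge0 R n i0 x0; nra.
rewrite inE in ycl.
have [Oy|nOy] := pselect (O y); last first.
  have wy := wb y (conj ycl nOy).
  have qy : qf i0 y <= Q by apply: ymax; rewrite inE.
  move: Vy; rewrite /V /comb; nra.
have dq : forall z v, O z -> derivable (qf i0) z v.
  by move=> z v _; case: (@qf_is_derive R n i0 z v).
have dV : forall z v, O z -> derivable V z v.
  by move=> z v Oz; apply: comb_derivable; [apply: dw | apply: dq].
have d2V i := @comb_second R n O w d (qf i0) y i Oo Oy dw dq (d2w y i Oy)
  ((@qf_second R n i0 i y).1).
have lapV : laplacian V y = laplacian w y + d * laplacian (qf i0) y.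
  apply: (@comb_lap R n O w d (qf i0) y Oo Oy dw dq); [move=> i; exact: d2w | move=> i; exact: (@qf_second R n i0 i y).1].
have Lpos : 0 < laplacian V y.
  rewrite lapV; apply: (ltr_wpDl (lw y Oy)); exact: mulr_gt0 d0 (@qf_lap_gt0 R n i0 y).
have : laplacian V y <= 0.
  rewrite /laplacian; apply: sumr_le0 => i _.
  pose e : 'rV[R]_n := unitv i.
  have C : (fun t : R => y + t *: e) @ 0 --> y + 0 *: e.
    apply: cvgD; first exact: cvg_cst.
    exact: scalel_continuous.
  have N : \forall t \near (0:R), O (y + t *: e).
    by apply: C; rewrite scale0r addr0; apply: Oo.
  case: N => r /= r0 Hr.
  have Hr' t : `|t| < r -> O (y + t *: e).
    by move=> tr; apply: Hr; rewrite /ball_ /= sub0r normrN.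
  pose g := fun t : R => V (y + t *: e).
  have g0 : g 0 = V y by rewrite /g scale0r addr0.
  have gmax t : `|t| < r -> g t <= g 0.
    by move=> tr; rewrite g0; apply: ymaxV; rewrite inE; apply: subset_closure; apply: Hr'.
  have gd t : `|t| < r -> derivable g t 1.
    by move=> tr; apply/line_derivable; apply: dV; apply: Hr'.
  have Dg : 'D_1 g = fun t => partial i V (y + t *: e).
    by apply/funext => t; rewrite /g line_derive.
  have g2d : derivable ('D_1 g) 0 1.
    rewrite Dg; apply/line_derivable; rewrite scale0r addr0; exact: (d2V i).1.
  have := @max_second R g r r0 gmax gd g2d.
  by rewrite Dg line_derive scale0r addr0.
lra.
Qed.

Lemma bounded_sub (A B : set 'rV[R]_n) : A `<=` B -> bounded_set B -> bounded_set A.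
Proof.
move=> AB BB; have BB2 : \forall M \near +oo, forall x, B x -> `|x| <= M := BB.
change (\forall M \near +oo, forall x, A x -> `|x| <= M).
near=> M.
have HM : forall y, B y -> `|y| <= M by near: M.
by move=> x /AB /HM.
Unshelve. all: by end_near.
Qed.
End MP.

Theorem lemma4 (R : realType) (N : nat) (Omega : set 'rV[R]_N)
  (p : R) (beta : R -> R) (u : R -> 'rV[R]_N -> R)
  (A0 : R) (phi0 : 'rV[R]_N -> R) :
  (2 <= N)%N ->
  open Omega -> bounded_set Omega -> connected Omega -> Omega !=set0 ->
  2 < p ->
  ((3 <= N)%N -> p < 2 * N%:R / (N%:R - 2)) ->
  admissible_beta beta ->
  (forall eps, 0 < eps <= 1 ->
     classical_dirichlet_sol Omega
       (fun _ v => eps^-1 * beta ((v - 1) / eps) - pos_part (v - 1) `^ (p - 1))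
       (u eps)) ->
  0 < A0 ->
  (forall eps x, 0 < eps <= 1 -> Omega x -> pos_part (u eps x - 1) `^ (p - 1) <= A0) ->
  classical_dirichlet_sol Omega (fun _ _ => - A0) phi0 ->
  (forall x, Omega x -> 0 < phi0 x) ->
  forall eps, 0 < eps <= 1 ->
    (forall x, Omega x -> u eps x <= phi0 x) /\
    [set x | Omega x /\ 1 <= u eps x] `<=` [set x | Omega x /\ 1 <= phi0 x] /\
    compact (closure [set x | Omega x /\ 1 <= phi0 x]) /\
    closure [set x | Omega x /\ 1 <= phi0 x] `<=` Omega.
Proof.
move=> HN Oo Ob Oc One hp hp2 hbeta Hu A0pos HA Hphi phipos eps heps.
have [[Ud [Ud2 _]] [Uc [Ub Ul]]] := Hu eps heps.
have [[Pd [Pd2 _]] [Pc [Pb Pl]]] := Hphi.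
have N0 : (0 < N)%N by apply: leq_trans HN.
pose i0 : 'I_N := Ordinal N0.
have dU : forall z v, Omega z -> derivable (u eps) z v.
  by move=> z v Oz; apply: diff_derivable; apply: Ud.
have dP : forall z v, Omega z -> derivable phi0 z v.
  by move=> z v Oz; apply: diff_derivable; apply: Pd.
have d2U : forall z i, Omega z -> derivable (partial i (u eps)) z (unitv i).
  by move=> z i Oz; apply: diff_derivable; apply: Ud2.
have d2P : forall z i, Omega z -> derivable (partial i phi0) z (unitv i).
  by move=> z i Oz; apply: diff_derivable; apply: Pd2.
have A : forall x, Omega x -> u eps x <= phi0 x.
  move=> x Ox.
  have := @maxprinc R N Omega i0 (comb (u eps) (-1) phi0) Oo Ob.
  move=> /(_ _ _ _ _ _ x Ox); rewrite /comb.
  move=> H; suff : u eps x + -1 * phi0 x <= 0 by lra.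
  apply: H.
  - exact: comb_within.
  - by move=> z zb; rewrite Ub // Pb //; lra.
  - by move=> z v Oz; apply: comb_derivable; [apply: dU | apply: dP].
  - by move=> z i Oz; exact: (@comb_second R N Omega (u eps) (-1) phi0 z i Oo Oz dU dP (d2U z i Oz) (d2P z i Oz)).1.
  - move=> z Oz.
    rewrite (@comb_lap R N Omega (u eps) (-1) phi0 z Oo Oz dU dP (fun i => d2U z i Oz) (fun i => d2P z i Oz)).
    rewrite Ul // Pl //.
    have hb : 0 <= beta ((u eps z - 1) / eps) by case: hbeta => _ [/(_ ((u eps z - 1) / eps)) /andP[]].
    have he : 0 <= eps^-1 by rewrite invr_ge0; case/andP: heps => /ltW.
    have := mulr_ge0 he hb; have := HA eps z heps Oz; lra.
have SO : closure [set x | Omega x /\ 1 <= phi0 x] `<=` Omega.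
  by apply: partC => // x xb; apply: Pb.
split; first exact: A.
split.
  move=> x [Ox ux]; split => //; have := A x Ox; lra.
split => //.
apply: bounded_closed_compact; last exact: closed_closure.
exact: bounded_sub SO Ob.
Qed.
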